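(* Assume the standing setup below. Then for all $r>0$ and all $t\ge2$, $$\log g(r^t)\ge t\log g(r).$$
   Context: Standing setup: $(\delta_n)_{n\in\mathbb N}$ is a sequence with $0<\delta_n<1/2$; $(a_n)_{n\in\mathbb N}$ is a positive strictly increasing sequence; $p_n=\lfloor a_n^{\delta_n/4}/4\rfloor$; and for all $n\in\mathbb N$: (C1) $a_1^{\delta_1/4}\ge4$, $a_{n+1}>a_n^2$, and $a_{n+1}^{\delta_{n+1}/2}>16a_n^{\delta_n}$; (C2) $a_{n+1}^{\delta_{n+1}/16}>a_n^{\delta_n}\log a_{n+1}$. The function $g:[0,\infty)\to[0,\infty)$ is defined by $g(r)=r^3$ for $0\le r<a_1$ and $g(r)=r^3\prod_{n:\,a_n\le r}(1+r/a_n)^{2p_n}$ for $r\ge a_1$. *)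

(* Defs.v *)
From Stdlib Require Import Reals ZArith ClassicalEpsilon.
Open Scope R_scope.

Definition pn (a delta : nat -> R) (n : nat) : Z :=
  Int_part (Rpower (a n) (delta n / 4) / 4).

Definition gfactor (a delta : nat -> R) (r : R) (n : nat) : R :=
  if Rle_dec (a n) r then Rpower (1 + r / a n) (2 * IZR (pn a delta n)) else 1.

Fixpoint gprod (a delta : nat -> R) (r : R) (N : nat) : R :=
  match N with
  | O => 1
  | S m => gprod a delta r m * gfactor a delta r (S m)
  end.

(* A cutoff N such that a_m > r for all m > N (exists since a_n -> infinity
   under the standing hypotheses); chosen by classical choice, default 0. *)
Definition gcut (a : nat -> R) (r : R) : nat :=
  epsilon (inhabits 0%nat) (fun N => forall m, (N < m)%nat -> r < a m).

(* g(r) = r^3 * prod_{n : a_n <= r} (1 + r/a_n)^(2 p_n)  (empty product if r < a_1) *)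
Definition g (a delta : nat -> R) (r : R) : R :=
  r ^ 3 * gprod a delta r (gcut a r).

(* Main.v *)
Require Import Defs.
From Stdlib Require Import Reals Lra Lia ZArith ClassicalEpsilon.
Open Scope R_scope.

Lemma myln_le x y : 0 < x -> x <= y -> ln x <= ln y.
Proof. intros Hx [H|H]; [left; apply ln_increasing; auto | subst; lra]. Qed.

Lemma ln_Rpower x y : 0 < x -> ln (Rpower x y) = y * ln x.
Proof. intros; unfold Rpower; rewrite ln_exp; auto. Qed.

Lemma Rpower_pos x y : 0 < Rpower x y.
Proof. unfold Rpower; apply exp_pos. Qed.

Lemma pn_nonneg a delta n : 0 < a n -> 0 <= IZR (pn a delta n).
Proof.
  intros Ha. unfold pn.
  set (x := Rpower (a n) (delta n / 4) / 4).
  assert (0 < x) by (unfold x; pose proof (Rpower_pos (a n) (delta n / 4)); lra).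
  destruct (base_Int_part x) as [_ H2].
  assert (IZR (-1) < IZR (Int_part x)) by (simpl; lra).
  apply lt_IZR in H0. apply IZR_le. lia.
Qed.

Lemma gfactor_pos a delta r n : 0 < gfactor a delta r n.
Proof. unfold gfactor; destruct Rle_dec; [apply Rpower_pos | lra]. Qed.

Lemma gprod_pos a delta r N : 0 < gprod a delta r N.
Proof.
  induction N; simpl; [lra|]. apply Rmult_lt_0_compat; auto. apply gfactor_pos.
Qed.

Lemma gprod_stable a delta r N :
  (forall m, (N < m)%nat -> r < a m) -> forall k, gprod a delta r (N + k) = gprod a delta r N.
Proof.
  intros HP k; induction k.
  - rewrite Nat.add_0_r; auto.
  - rewrite Nat.add_succ_r; simpl. rewrite IHk. unfold gfactor.
    destruct Rle_dec as [h|h]; [|lra]. specialize (HP (S (N + k)) ltac:(lia)). lra.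
Qed.

Lemma ln_gprod a delta r N :
  ln (gprod a delta r N) = sum_f_R0 (fun _ => 0) 0 + 0 -> True.
Proof. auto. Qed.

Section Main.
Variables (a delta : nat -> R).
Hypothesis Hdelta : forall n, (1 <= n)%nat -> 0 < delta n < 1 / 2.
Hypothesis Hapos : forall n, (1 <= n)%nat -> 0 < a n.
Hypothesis Hainc : forall n, (1 <= n)%nat -> a n < a (S n).
Hypothesis HC1a : Rpower (a 1%nat) (delta 1%nat / 4) >= 4.
Hypothesis HC1b : forall n, (1 <= n)%nat -> a (S n) > (a n) ^ 2.

Lemma a_ge_a1 n : (1 <= n)%nat -> a 1%nat <= a n.
Proof.
  induction n; intros H; [lia|]. destruct n; [lra|].
  specialize (IHn ltac:(lia)). specialize (Hainc (S n) ltac:(lia)). lra.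
Qed.

Lemma ln2_pos : 0 < ln 2.
Proof. rewrite <- ln_1. apply ln_increasing; lra. Qed.

Lemma ln_a1 : 16 * ln 2 <= ln (a 1%nat).
Proof.
  pose proof (Hapos 1 (le_n _)) as Ha. pose proof (Hdelta 1 (le_n _)) as Hd.
  assert (H4 : ln 4 <= ln (Rpower (a 1%nat) (delta 1%nat / 4))) by (apply myln_le; lra).
  rewrite ln_Rpower in H4 by auto.
  replace 4 with (2*2) in H4 at 1 by lra. rewrite ln_mult in H4 by lra.
  pose proof ln2_pos. nra.
Qed.

Lemma a1_gt1 : 1 < a 1%nat.
Proof.
  pose proof ln_a1. pose proof ln2_pos. pose proof (Hapos 1 (le_n _)).
  destruct (Rlt_le_dec 1 (a 1%nat)); auto.
  assert (ln (a 1%nat) <= ln 1) by (apply myln_le; lra). rewrite ln_1 in H2. lra.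
Qed.

Lemma a1_gt2 : 2 < a 1%nat.
Proof.
  pose proof ln_a1. pose proof ln2_pos. pose proof (Hapos 1 (le_n _)).
  destruct (Rlt_le_dec 2 (a 1%nat)); auto.
  assert (ln (a 1%nat) <= ln 2) by (apply myln_le; lra). lra.
Qed.

Lemma a_ge_n n : (1 <= n)%nat -> INR n <= a n.
Proof.
  induction n; intros H; [lia|]. destruct n.
  - simpl. pose proof a1_gt1. lra.
  - specialize (IHn ltac:(lia)). pose proof (HC1b (S n) ltac:(lia)).
    pose proof (a_ge_a1 (S n) ltac:(lia)). pose proof a1_gt2.
    rewrite S_INR. rewrite S_INR in IHn. pose proof (pos_INR n).
    assert (a (S n) ^ 2 >= 2 * a (S n)).
    { assert (0 <= a (S n) * (a (S n) - 2)) by (apply Rmult_le_pos; lra). simpl; lra. }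
    rewrite S_INR. lra.
Qed.

Lemma gcut_spec r : 0 < r -> forall m, (gcut a r < m)%nat -> r < a m.
Proof.
  intros Hr. unfold gcut. apply epsilon_spec.
  destruct (archimed r) as [H1 _].
  exists (Z.to_nat (up r)). intros m Hm.
  assert (Hu : (0 < up r)%Z) by (apply lt_IZR; simpl; lra).
  assert (INR (Z.to_nat (up r)) = IZR (up r)).
  { rewrite INR_IZR_INZ, Z2Nat.id; auto; lia. }
  assert (1 <= m)%nat by lia.
  apply lt_INR in Hm. pose proof (a_ge_n m H0). lra.
Qed.

Lemma key r t n : 0 < r -> 2 <= t -> (1 <= n)%nat -> a n <= r ->
  t * ln (1 + r / a n) <= ln (1 + Rpower r t / a n).
Proof.
  intros Hr Ht Hn Har.
  pose proof (a_ge_a1 n Hn) as G0. pose proof a1_gt1 as G1. pose proof ln_a1 as G2. pose proof ln2_pos as G3.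
  assert (Han : 0 < a n) by lra.
  assert (La : ln (a 1%nat) <= ln (a n)) by (apply myln_le; lra).
  assert (Hx : 1 <= r / a n) by (apply (Rmult_le_reg_r (a n)); auto; field_simplify; lra).
  assert (H1 : ln (1 + r / a n) <= ln 2 + ln r - ln (a n)).
  { replace (ln 2 + ln r - ln (a n)) with (ln (2 * (r * / a n))).
    - apply myln_le; unfold Rdiv in *; lra.
    - rewrite ln_mult, ln_mult, ln_Rinv; try lra; apply Rinv_0_lt_compat in Han; try nra. }
  assert (H2 : t * ln r - ln (a n) <= ln (1 + Rpower r t / a n)).
  { replace (t * ln r - ln (a n)) with (ln (Rpower r t * / a n)).
    - apply myln_le. apply Rmult_lt_0_compat; [apply Rpower_pos|apply Rinv_0_lt_compat; auto].
      unfold Rdiv; lra.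
    - rewrite ln_mult, ln_Rinv, ln_Rpower; auto; try lra. apply Rpower_pos.
      apply Rinv_0_lt_compat; auto. }
  assert (H3 : (t - 1) * (16 * ln 2) <= (t - 1) * ln (a n)) by (apply Rmult_le_compat_l; lra).
  nra.
Qed.

Lemma factor_ineq r t n : 0 < r -> 2 <= t -> (1 <= n)%nat ->
  t * ln (gfactor a delta r n) <= ln (gfactor a delta (Rpower r t) n).
Proof.
  intros Hr Ht Hn. pose proof (Hapos n Hn) as Han. pose proof (pn_nonneg a delta n Han) as Hp.
  unfold gfactor. destruct (Rle_dec (a n) r) as [h1|h1].
  - pose proof (a_ge_a1 n Hn). pose proof a1_gt1.
    assert (r <= Rpower r t).
    { rewrite <- (exp_ln r) at 1 by auto. unfold Rpower.
      assert (0 <= ln r) by (rewrite <- ln_1; apply myln_le; lra).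
      assert (ln r <= t * ln r) by nra.
      destruct H2 as [q|q]; [left; apply exp_increasing; auto | rewrite <- q; lra]. }
    destruct (Rle_dec (a n) (Rpower r t)) as [h2|h2]; [|lra].
    rewrite !ln_Rpower by (apply Rplus_lt_0_compat; [lra| unfold Rdiv; apply Rmult_lt_0_compat; [try apply Rpower_pos; try lra| apply Rinv_0_lt_compat; lra]]).
    pose proof (key r t n Hr Ht Hn h1).
    assert (0 <= ln (1 + r / a n)).
    { rewrite <- ln_1. apply myln_le; [lra|]. assert (0 < r / a n) by (unfold Rdiv; apply Rmult_lt_0_compat; [lra|apply Rinv_0_lt_compat; lra]). lra. }
    nra.
  - rewrite ln_1, Rmult_0_r. destruct Rle_dec; [|rewrite ln_1; lra].
    rewrite ln_Rpower.
    + apply Rmult_le_pos; [lra|]. rewrite <- ln_1. apply myln_le; [lra|].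
      assert (0 < Rpower r t / a n) by (unfold Rdiv; apply Rmult_lt_0_compat; [apply Rpower_pos|apply Rinv_0_lt_compat; lra]). lra.
    + assert (0 < Rpower r t / a n) by (unfold Rdiv; apply Rmult_lt_0_compat; [apply Rpower_pos|apply Rinv_0_lt_compat; lra]). lra.
Qed.

Lemma gprod_ineq r t N : 0 < r -> 2 <= t ->
  t * ln (gprod a delta r N) <= ln (gprod a delta (Rpower r t) N).
Proof.
  intros Hr Ht. induction N; simpl.
  - rewrite ln_1; lra.
  - rewrite !ln_mult by (apply gprod_pos || apply gfactor_pos).
    pose proof (factor_ineq r t (S N) Hr Ht ltac:(lia)). lra.
Qed.

End Main.

Theorem lemma3p5 (a delta : nat -> R)
  (Hdelta : forall n, (1 <= n)%nat -> 0 < delta n < 1 / 2)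
  (Hapos : forall n, (1 <= n)%nat -> 0 < a n)
  (Hainc : forall n, (1 <= n)%nat -> a n < a (S n))
  (HC1a : Rpower (a 1%nat) (delta 1%nat / 4) >= 4)
  (HC1b : forall n, (1 <= n)%nat -> a (S n) > (a n) ^ 2)
  (HC1c : forall n, (1 <= n)%nat ->
     Rpower (a (S n)) (delta (S n) / 2) > 16 * Rpower (a n) (delta n))
  (HC2 : forall n, (1 <= n)%nat ->
     Rpower (a (S n)) (delta (S n) / 16) > Rpower (a n) (delta n) * ln (a (S n))) :
  forall r t : R, 0 < r -> 2 <= t ->
    ln (g a delta (Rpower r t)) >= t * ln (g a delta r).
Proof.
  intros r t Hr Ht. unfold g.
  set (N1 := gcut a r). set (N2 := gcut a (Rpower r t)).
  assert (E1 : gprod a delta r N1 = gprod a delta r (N1 + N2)).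
  { symmetry; apply (gprod_stable a delta). eapply gcut_spec; eauto. }
  assert (E2 : gprod a delta (Rpower r t) N2 = gprod a delta (Rpower r t) (N1 + N2)).
  { rewrite Nat.add_comm. symmetry; apply (gprod_stable a delta). eapply gcut_spec; eauto. apply Rpower_pos. }
  rewrite E1, E2.
  pose proof (Rpower_pos r t).
  rewrite !ln_mult by (apply gprod_pos || apply pow_lt; auto).
  rewrite !ln_pow by auto. rewrite ln_Rpower by auto.
  pose proof (gprod_ineq a delta Hdelta Hapos Hainc HC1a r t (N1 + N2) Hr Ht).
  simpl INR. lra.
Qed.
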